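(* Let $\mathcal F\subseteq\mathcal O(A)$ be a conservative symmetric clone and $n\ge2$ a natural number. (1) If $\mathcal F$ contains an $n$-ary function $f$ that is not a projection but whose restriction to $A^n_{<n}$ coincides with the restriction of some projection $e^n_i$, then $\mathcal F$ satisfies $\Delta^s_n$. (2) If $\mathcal F$ contains a $\partial$-function, then $\mathcal F$ satisfies $\Delta^\partial$. (3) If $\mathcal F$ contains an $\ell$-function, then $\mathcal F$ satisfies $\Delta^s_3$.
   Context: $\mathcal O(A)=\bigcup_{n<\omega}A^{A^n}$; $\mathcal F_{[n]}=\mathcal F\cap A^{A^n}$; $S_A$ the permutations of $A$. Elements of $A^n$ are $\mathbf x=x_0\dots x_{n-1}$, $\mathrm{ran}\,\mathbf x$ the set of entries, $A^n_k=\{\mathbf x:|\mathrm{ran}\,\mathbf x|=k\}$, $A^n_{<n}=\bigcup_{k<n}A^n_k$; projections $e^n_i(\mathbf x)=x_i$. A clone with carrier $A$ is a subset of $\mathcal O(A)$ containing all projections and closed under composition; conservative if $f(\mathbf a)\in\mathrm{ran}\,\mathbf a$ for all members; symmetric if $f_\sigma(\mathbf a)=\sigma^{-1}(f(\sigma(\mathbf a)))$ is a member for each member $f$ and $\sigma\in S_A$. A $\partial$-function is $\partial\in\mathcal O(A)_{[3]}$ with $\partial(xxy)=\partial(xyx)=\partial(yxx)=x$ for all $x,y\in A$; an $\ell$-function is $\ell\in\mathcal O(A)_{[3]}$ with $\ell(x,y,y)=\ell(y,x,y)=\ell(y,y,x)=x$ for all $x,y\in A$. $\Delta^s_n$: there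 is $i<n$ such that for every $\mathbf a\in A^n_n$ and $a\in\mathrm{ran}\,\mathbf a$ there is $s\in\mathcal F_{[n]}$ with $s(\mathbf a)=a$ and $s(\mathbf x)=x_i$ for all $\mathbf x\in A^n_{<n}$. $\Delta^\partial$: for every $\mathbf a\in A^3_3$ and $a\in\mathrm{ran}\,\mathbf a$ there is a $\partial$-function $\partial\in\mathcal F$ with $\partial(\mathbf a)=a$. *)

(* Defs.v *)
From mathcomp Require Import all_boot.
Set Implicit Arguments. Unset Strict Implicit. Unset Printing Implicit Defensive.

Definition op (A : Type) (n : nat) := ('I_n -> A) -> A.

Definition opset (A : Type) := forall n : nat, op A n -> Prop.

Definition proj (A : Type) (n : nat) (i : 'I_n) : op A n := fun x => x i.

(* x in A^n_n  iff  |ran x| = n  iff  x is injective;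
   x in A^n_{<n} iff x is not injective. *)
Definition full_tuple (A : Type) (n : nat) (x : 'I_n -> A) : Prop := injective x.

Definition in_ran (A : Type) (n : nat) (a : A) (x : 'I_n -> A) : Prop :=
  exists i : 'I_n, a = x i.

Definition is_clone (A : Type) (F : opset A) : Prop :=
  (forall n (i : 'I_n), F n (@proj A n i)) /\
  (forall n m (f : op A n) (g : 'I_n -> op A m),
      F n f -> (forall i, F m (g i)) -> F m (fun x => f (fun i => g i x))).

Definition conservative (A : Type) (F : opset A) : Prop :=
  forall n (f : op A n), F n f -> forall x, in_ran (f x) x.

Definition symmetric_clone (A : Type) (F : opset A) : Prop :=
  forall (sigma sigma' : A -> A), cancel sigma sigma' -> cancel sigma' sigma ->
  forall n (f : op A n), F n f -> F n (fun x => sigma' (f (fun i => sigma (x i)))).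

Definition trip (A : Type) (x y z : A) : 'I_3 -> A :=
  fun i => match val i with 0 => x | 1 => y | _ => z end.

Definition partial_fun (A : Type) (d : op A 3) : Prop :=
  forall x y : A, d (trip x x y) = x /\ d (trip x y x) = x /\ d (trip y x x) = x.

Definition ell_fun (A : Type) (l : op A 3) : Prop :=
  forall x y : A, l (trip x y y) = x /\ l (trip y x y) = x /\ l (trip y y x) = x.

Definition Delta_s (A : Type) (F : opset A) (n : nat) : Prop :=
  exists i : 'I_n, forall a : 'I_n -> A, full_tuple a ->
    forall b : A, in_ran b a ->
      exists s : op A n, F n s /\ s a = b /\
        (forall x : 'I_n -> A, ~ full_tuple x -> s x = x i).

Definition Delta_partial (A : Type) (F : opset A) : Prop :=
  forall a : 'I_3 -> A, full_tuple a ->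
    forall b : A, in_ran b a ->
      exists d : op A 3, F 3 d /\ partial_fun d /\ d a = b.

(* Main.v *)
Require Import Defs.
From mathcomp Require Import all_boot.
From Stdlib Require Import Classical ClassicalEpsilon FunctionalExtensionality.
Set Implicit Arguments. Unset Strict Implicit. Unset Printing Implicit Defensive.

Definition swp (A : Type) (u v w : A) : A :=
  if excluded_middle_informative (w = u) then v
  else if excluded_middle_informative (w = v) then u else w.

Lemma swp_u (A : Type) (u v : A) : swp u v u = v.
Proof. rewrite /swp; by case: excluded_middle_informative. Qed.

Lemma swp_v (A : Type) (u v : A) : swp u v v = u.
Proof.
rewrite /swp; destruct (excluded_middle_informative (v = u)) as [E|E]; first by [].
by destruct (excluded_middle_informative (v = v)).
Qed.

Lemma swp_o (A : Type) (u v w : A) : w <> u -> w <> v -> swp u v w = w.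
Proof.
move=> H1 H2; rewrite /swp; destruct (excluded_middle_informative (w = u)) => //.
by destruct (excluded_middle_informative (w = v)).
Qed.

Lemma swpK (A : Type) (u v : A) : cancel (swp u v) (swp u v).
Proof.
move=> w.
case: (classic (w = u)) => [->|Hu]; first by rewrite swp_u swp_v.
case: (classic (w = v)) => [->|Hv]; first by rewrite swp_v swp_u.
by rewrite !swp_o.
Qed.

Lemma ext_perm (A : Type) n (a x : 'I_n -> A) : injective a -> injective x ->
  exists sg sg' : A -> A, [/\ cancel sg sg', cancel sg' sg & forall j, sg (a j) = x j].
Proof.
move=> ia ix.
suff H : forall k, k <= n -> exists sg sg' : A -> A,
    [/\ cancel sg sg', cancel sg' sg & forall j : 'I_n, j < k -> sg (a j) = x j].
  have [sg [sg' [H1 H2 H3]]] := H n (leqnn n).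
  by exists sg, sg'; split => // j; apply: H3.
elim=> [|k IH] Hk.
  by exists id, id; split.
have [sg [sg' [H1 H2 H3]]] := IH (ltnW Hk).
pose jk : 'I_n := Ordinal Hk.
pose c := sg (a jk).
exists (fun w => swp c (x jk) (sg w)), (fun w => sg' (swp c (x jk) w)); split.
- by move=> w /=; rewrite swpK H1.
- by move=> w /=; rewrite H2 swpK.
- move=> j; rewrite ltnS leq_eqVlt => /orP [/eqP Ej|Ej].
  + have -> : j = jk by apply: val_inj.
    by rewrite swp_u.
  + rewrite H3 // swp_o //.
    * move=> E; move: E; rewrite -H3 // => /(can_inj H1) /ia Ejk.
      by move: Ej; rewrite Ejk /= ltnn.
    * move=> /ix Ejk.
      by move: Ej; rewrite Ejk /= ltnn.
Qed.

Definition tr n (k m j : 'I_n) : 'I_n :=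
  if j == k then m else if j == m then k else j.

Lemma trK n (k m : 'I_n) : involutive (tr k m).
Proof.
move=> j; rewrite /tr.
case: (eqVneq j k) => [->|Hjk].
  case: (eqVneq m k) => [->|Hmk]; first by rewrite ?eqxx.
  by rewrite ?eqxx ?(negbTE Hmk).
case: (eqVneq j m) => [->|Hjm]; first by rewrite ?eqxx.
by rewrite ?(negbTE Hjk) ?(negbTE Hjm).
Qed.

Lemma tr_k n (k m : 'I_n) : tr k m k = m.
Proof. by rewrite /tr eqxx. Qed.

Lemma tr_o n (k m j : 'I_n) : j != k -> j != m -> tr k m j = j.
Proof. by rewrite /tr => /negbTE -> /negbTE ->. Qed.

Lemma core (A : Type) (F : opset A) n (f : op A n) (i : 'I_n) :
  is_clone F -> conservative F -> symmetric_clone F -> F n f ->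
  (forall x, ~ full_tuple x -> f x = x i) -> (exists x, f x <> x i) -> Delta_s F n.
Proof.
move=> [Hp Hc] Hcons Hsym Ff Hag [x Hx].
have ix : full_tuple x by apply: NNPP => H; apply: Hx; apply: Hag.
have [k Ek] := Hcons _ _ Ff x.
have Hki : i != k by apply/eqP => E; apply: Hx; rewrite Ek E.
exists i => a ia b [m ->].
case: (eqVneq m i) => [->|Hmi].
  by exists (@proj A n i); split.
pose p := tr k m.
have ia' : injective (fun j => a (p j)) by move=> j1 j2 /ia /(can_inj (trK k m)).
have [sg [sg' [H1 H2 H3]]] := ext_perm ia' ix.
exists (fun y => sg' (f (fun j => sg (y (p j))))); split; [|split].
- apply: (Hsym sg sg' H1 H2 n (fun y => f (fun j => y (p j)))).
  exact: (Hc _ _ f (fun j => @proj A n (p j)) Ff (fun j => Hp _ _)).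
- have -> : (fun j => sg (a (p j))) = x by apply: functional_extensionality.
  by rewrite Ek -H3 H1 /p tr_k.
- move=> y Hy; rewrite Hag.
    by rewrite H1 /p tr_o // eq_sym.
  move=> H; apply: Hy => j1 j2 E; apply: (can_inj (trK k m)); apply: H => /=.
  by rewrite /p !trK E.
Qed.

Definition i1 : 'I_3 := @Ordinal 3 1 isT.
Definition i2 : 'I_3 := @Ordinal 3 2 isT.

Lemma tup3 (A : Type) (t : 'I_3 -> A) : t = trip (t ord0) (t i1) (t i2).
Proof.
apply: functional_extensionality => -[[|[|[|j]]] Hj] //=;
  by congr t; apply: val_inj.
Qed.

Lemma maj (A : Type) (d : op A 3) : partial_fun d ->
  forall t p q, p != q -> t p = t q -> d t = t p.
Proof.
move=> Hd t p q; rewrite (tup3 t).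
move: (t ord0) (t i1) (t i2) => x y z.
have H1 := Hd x y; have H2 := Hd x z; have H3 := Hd y x;
have H4 := Hd y z; have H5 := Hd z x; have H6 := Hd z y.
case: p => [[|[|[|p]]] Hp] //; case: q => [[|[|[|q]]] Hq] //= _ E;
  rewrite /trip /= in E *;
  first [rewrite E; by intuition | rewrite -E; by intuition].
Qed.

Lemma noninj (A : Type) n (t : 'I_n -> A) : ~ full_tuple t ->
  exists u v, u != v /\ t u = t v.
Proof.
move=> H; apply: NNPP => H'; apply: H => u v E.
case: (eqVneq u v) => // Huv; exfalso; apply: H'; by exists u, v.
Qed.

Lemma part2 (A : Type) (F : opset A) :
  is_clone F -> conservative F -> symmetric_clone F ->
  (exists d : op A 3, F 3 d /\ partial_fun d) -> Delta_partial F.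
Proof.
move=> [Hp Hc] Hcons Hsym [d [Fd Hd]] a ia b [m ->].
have [k Ek] := Hcons _ _ Fd a.
pose p := tr k m.
have ia' : injective (fun j => a (p j)) by move=> j1 j2 /ia /(can_inj (trK k m)).
have [sg [sg' [H1 H2 H3]]] := ext_perm ia' ia.
exists (fun y => sg' (d (fun j => sg (y (p j))))); split; [|split].
- apply: (Hsym sg sg' H1 H2 3 (fun y => d (fun j => y (p j)))).
  exact: (Hc _ _ d (fun j => @proj A 3 (p j)) Fd (fun j => Hp _ _)).
- move=> x y.
  have key : forall (t : 'I_3 -> A) u v, u != v -> t u = t v ->
      sg' (d (fun j => sg (t (p j)))) = t u.
    move=> t u v Huv E.
    rewrite (@maj _ d Hd _ (p u) (p v)) /= /p ?trK ?H1 ?E //.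
    apply/eqP => /(can_inj (trK k m)) Euv.
    by rewrite Euv eqxx in Huv.
  split; [|split].
  + exact: (key (trip x x y) ord0 i1).
  + exact: (key (trip x y x) ord0 i2).
  + exact: (key (trip y x x) i1 i2).
- have -> : (fun j => sg (a (p j))) = a by apply: functional_extensionality.
  by rewrite Ek -H3 H1 /p tr_k.
Qed.

Lemma ell1 (A : Type) (l : op A 3) x y : ell_fun l -> l (trip x y y) = x.
Proof. by move=> H; case: (H x y). Qed.
Lemma ell2 (A : Type) (l : op A 3) x y : ell_fun l -> l (trip y x y) = x.
Proof. by move=> H; case: (H x y) => _ []. Qed.
Lemma ell3 (A : Type) (l : op A 3) x y : ell_fun l -> l (trip y y x) = x.
Proof. by move=> H; case: (H x y) => _ []. Qed.

Definition g0 (A : Type) (l : op A 3) : op A 3 :=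
  fun t => l (trip (l t) (t i1) (t i2)).
Definition g1 (A : Type) (l : op A 3) : op A 3 :=
  fun t => l (trip (t ord0) (l t) (t i2)).

Lemma g0_ag (A : Type) (l : op A 3) : ell_fun l ->
  forall t, ~ full_tuple t -> g0 l t = t ord0.
Proof.
move=> Hl t /noninj [u [v [Huv E]]]; move: Huv E; rewrite /g0 (tup3 t).
move: (t ord0) (t i1) (t i2) => x y z.
case: u => [[|[|[|u]]] Hu] //; case: v => [[|[|[|v]]] Hv] //= _ E;
  rewrite /trip /= in E *;
  first [rewrite E | rewrite -E];
  by rewrite ?(ell1 _ _ Hl) ?(ell2 _ _ Hl) ?(ell3 _ _ Hl)
             ?(ell1 _ _ Hl) ?(ell2 _ _ Hl) ?(ell3 _ _ Hl).
Qed.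

Lemma g1_ag (A : Type) (l : op A 3) : ell_fun l ->
  forall t, ~ full_tuple t -> g1 l t = t i1.
Proof.
move=> Hl t /noninj [u [v [Huv E]]]; move: Huv E; rewrite /g1 (tup3 t).
move: (t ord0) (t i1) (t i2) => x y z.
case: u => [[|[|[|u]]] Hu] //; case: v => [[|[|[|v]]] Hv] //= _ E;
  rewrite /trip /= in E *;
  first [rewrite E | rewrite -E];
  by rewrite ?(ell1 _ _ Hl) ?(ell2 _ _ Hl) ?(ell3 _ _ Hl)
             ?(ell1 _ _ Hl) ?(ell2 _ _ Hl) ?(ell3 _ _ Hl).
Qed.

Lemma part3 (A : Type) (F : opset A) :
  is_clone F -> conservative F -> symmetric_clone F ->
  (exists l : op A 3, F 3 l /\ ell_fun l) -> Delta_s F 3.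
Proof.
move=> Hcl Hcons Hsym [l [Fl Hl]].
have [Hp Hc] := Hcl.
have Htr : forall i : 'I_3, F 3 (trip l (@proj A 3 i1) (@proj A 3 i2) i).
  case=> [[|[|[|j]]] Hj] //; rewrite /trip /=; first [exact: Fl | exact: Hp].
have Htr' : forall i : 'I_3, F 3 (trip (@proj A 3 ord0) l (@proj A 3 i2) i).
  case=> [[|[|[|j]]] Hj] //; rewrite /trip /=; first [exact: Fl | exact: Hp].
have Fg0 : F 3 (g0 l).
  have := Hc 3 3 l _ Fl Htr.
  congr (F 3); apply: functional_extensionality => t; rewrite /g0; congr l.
  by apply: functional_extensionality => -[[|[|[|j]]] Hj].
have Fg1 : F 3 (g1 l).
  have := Hc 3 3 l _ Fl Htr'.
  congr (F 3); apply: functional_extensionality => t; rewrite /g1; congr l.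
  by apply: functional_extensionality => -[[|[|[|j]]] Hj].
case: (classic (exists a : 'I_3 -> A, full_tuple a)) => [[a ia]|Hno]; last first.
  by exists ord0 => a ia; exfalso; apply: Hno; exists a.
have [k Ek] := Hcons _ _ Fl a.
case: k Ek => [[|[|[|k]]] Hk] Ek //.
- have Ek' : l a = a ord0 by rewrite Ek; congr a; apply: val_inj.
  apply: (core Hcl Hcons Hsym Fg1 (g1_ag Hl)); exists a.
  rewrite /g1 Ek' (ell3 _ _ Hl).
  by move=> /ia /(congr1 val).
- have Ek' : l a = a i1 by rewrite Ek; congr a; apply: val_inj.
  apply: (core Hcl Hcons Hsym Fg0 (g0_ag Hl)); exists a.
  rewrite /g0 Ek' (ell3 _ _ Hl).
  by move=> /ia /(congr1 val).
- have Ek' : l a = a i2 by rewrite Ek; congr a; apply: val_inj.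
  apply: (core Hcl Hcons Hsym Fg0 (g0_ag Hl)); exists a.
  rewrite /g0 Ek' (ell2 _ _ Hl).
  by move=> /ia /(congr1 val).
Qed.

Theorem mainTheorem17 (A : Type) (F : opset A) (n : nat) :
  is_clone F -> conservative F -> symmetric_clone F -> 2 <= n ->
  ((exists f : op A n, F n f /\
      (forall j : 'I_n, ~ (forall x, f x = @proj A n j x)) /\
      (exists i : 'I_n, forall x : 'I_n -> A, ~ full_tuple x -> f x = @proj A n i x))
     -> Delta_s F n) /\
  ((exists d : op A 3, F 3 d /\ partial_fun d) -> Delta_partial F) /\
  ((exists l : op A 3, F 3 l /\ ell_fun l) -> Delta_s F 3).
Proof.
move=> Hcl Hcons Hsym _; split; [|split].
- move=> [f [Ff [Hnp [i Hag]]]].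
  apply: (core Hcl Hcons Hsym Ff Hag).
  have [x Hx] := not_all_ex_not _ _ (Hnp i).
  by exists x.
- exact: part2.
- exact: part3.
Qed.
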